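(* Consider the case $n=1$ (cubic integrals) of the construction below with $\nu_1=1$, $F(a)=a-a_1$ and $x(a)=\frac a2+\frac{\epsilon c}{\sqrt{\epsilon(a-a_1)}}$, $\epsilon=\pm1$, so that with $u=\sqrt a$ the metric is $$g=\frac{\mu^2(u)\,du^2+dy^2}{u^2},\qquad \mu(u)=1-\frac{c}{[\epsilon(u^2-a_1)]^{3/2}} .$$ The resulting superintegrable systems are globally defined on $M\cong\mathbb{H}^2$ in the following cases: $\mathcal{I}_{++}$: $\mu=1-\frac1{(u^2-a_1)^{3/2}}$, $a_1\in(-\infty,-1)$; $\mathcal{I}_{+-}$: $\mu=1+\frac1{(u^2-a_1)^{3/2}}$, $a_1\in(-\infty,0)$; $\mathcal{I}_{-+}$: $\mu=1-\frac1{(a_1-u^2)^{3/2}}$, $a_1\in(0,1)$; $\mathcal{I}_{--}$: $\mu=1+\frac1{(a_1-u^2)^{3/2}}$, $a_1\in(0,\infty)$.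
   Context: Construction (odd degree $2n+1$, here $n=1$): $F=\sum_kA_ka^k=\prod_i(a-a_i)$, $\Delta_i=\epsilon_i(a-a_i)$, $x=\frac{\nu_n}2a+\sum_i\xi_i\Delta_i^{-1/2}$ on the maximal interval of $a>0$ with all $\Delta_i>0$; $H=\Pi^2+aP_y^2$, $\Pi=\frac a{\dot x}P_a$ (geodesic Hamiltonian of $g=\dot x^2a^{-2}da^2+a^{-1}dy^2$, $y\in\mathbb{R}$); $G=\sum_{k=0}^nA_{n-k}H^{n-k}P_y^{2k+1}$, $Q_1=\sum_{k=0}^n\tilde b_kH^{n-k}\Pi P_y^{2k}$, $Q_2=\sum_{k=0}^n\tilde c_kH^{n-k}P_y^{2k+1}$, $S_1=Q_1+yG$, $S_2=Q_2+yQ_1+\frac{y^2}2G$, with $\tilde b_k=(-1)^k(\nu_n\sigma_k+\sum_i\frac{\xi_i}{\sqrt{\Delta_i}}\sigma^i_{k-1})$, $\tilde c_k=\frac{(-1)^{k+1}}2\{\nu_n^2a\sigma_k+2\nu_n\sum_i\frac{\xi_i}{\sqrt{\Delta_i}}(\sigma^i_k+a\sigma^i_{k-1})+\sum_i\frac{\xi_i^2}{\Delta_i}\sigma^i_{k-1}+\sum_{i\neq j}\frac{\xi_i\xi_j}{\sqrt{\Delta_i\Delta_j}}(\sigma^{ij}_{k-1}+a\sigma^{ij}_{k-2})\}$; for $n=1$: $\sigma_0=1$, $\sigma_1=a_1$, $\sigma^1_0=1$, $\sigma^1_{-1}=\sigma^1_1=0$ (no $\sigma^{ij}$ terms). ''Globally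 defined on $M\cong\mathbb{H}^2$'': $g$ is a smooth Riemannian metric on the whole domain $M=J\times\mathbb{R}$ ($J$ the $u$-interval), there is a smooth diffeomorphism $t=t(u)$ of $J$ onto $(0,\infty)$ or $(-\infty,0)$ with $g=\Phi\,(dt^2+dy^2)/t^2$, $\Phi$ smooth and positive, and $S_1,S_2$ are smooth on $T^*M$. *)

(* Defs.v *)
From HB Require Import structures.
From mathcomp Require Import all_boot all_order all_algebra.
From mathcomp Require Import all_classical all_reals all_analysis.
Set Implicit Arguments. Unset Strict Implicit. Unset Printing Implicit Defensive.
Import Order.TTheory GRing.Theory Num.Theory.
Import numFieldNormedType.Exports.
Local Open Scope classical_set_scope.
Local Open Scope ring_scope.

Section Defs.
Variable R : realType.

Definition smooth1 (U : set R) (f : R -> R) : Prop :=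
  forall (k : nat) (x : R), U x -> derivable (derive1n k f) x 1.

Fixpoint Ck (n k : nat) (U : set 'rV[R]_n) (f : 'rV[R]_n -> R) : Prop :=
  match k with
  | 0 => forall x, U x -> {for x, continuous f}
  | k'.+1 => (forall x, U x -> {for x, continuous f}) /\
       forall i : 'I_n,
         (forall x, U x -> derivable f x (delta_mx 0 i)) /\
         Ck k' U (fun x => 'D_(delta_mx 0 i) f x)
  end.

Definition smooth_on (n : nat) (U : set 'rV[R]_n) (f : 'rV[R]_n -> R) : Prop :=
  forall k, Ck k U f.

Definition posdef2 (A : 'M[R]_2) : Prop :=
  forall v : 'rV[R]_2, v != 0 -> 0 < (v *m A *m v^T) 0 0.

Variables (eps c a1 : R).

Definition nu1 : R := 1.
Definition xi1 : R := eps * c.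
Definition Delta (a : R) : R := eps * (a - a1).
(* F(a) = A_1 a + A_0 *)
Definition A1 : R := 1.
Definition A0 : R := - a1.

Definition xfun (a : R) : R := nu1 * a / 2 + xi1 / Num.sqrt (Delta a).
Definition xdot (a : R) : R := derive1 xfun a.

(* elementary symmetric data for n = 1 *)
Definition sigma0 : R := 1.
Definition sigma1 : R := a1.
Definition sigma1_0 : R := 1.
Definition sigma1_m1 : R := 0.
Definition sigma1_1 : R := 0.

Definition bt0 (a : R) : R := nu1 * sigma0 + xi1 / Num.sqrt (Delta a) * sigma1_m1.
Definition bt1 (a : R) : R := - (nu1 * sigma1 + xi1 / Num.sqrt (Delta a) * sigma1_0).
Definition ct0 (a : R) : R :=
  - (1 / 2) * (nu1 ^+ 2 * a * sigma0
     + 2 * nu1 * (xi1 / Num.sqrt (Delta a)) * (sigma1_0 + a * sigma1_m1)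
     + xi1 ^+ 2 / Delta a * sigma1_m1).
Definition ct1 (a : R) : R :=
  (1 / 2) * (nu1 ^+ 2 * a * sigma1
     + 2 * nu1 * (xi1 / Num.sqrt (Delta a)) * (sigma1_1 + a * sigma1_0)
     + xi1 ^+ 2 / Delta a * sigma1_0).

Definition Pi_a (a Pa : R) : R := a / xdot a * Pa.
Definition H_a (a Pa Py : R) : R := (Pi_a a Pa) ^+ 2 + a * Py ^+ 2.
Definition G_a (a Pa Py : R) : R :=
  A1 * H_a a Pa Py * Py + A0 * Py ^+ 3.
Definition Q1_a (a Pa Py : R) : R :=
  bt0 a * H_a a Pa Py * Pi_a a Pa + bt1 a * Pi_a a Pa * Py ^+ 2.
Definition Q2_a (a Pa Py : R) : R :=
  ct0 a * H_a a Pa Py * Py + ct1 a * Py ^+ 3.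
Definition S1_a (a y Pa Py : R) : R := Q1_a a Pa Py + y * G_a a Pa Py.
Definition S2_a (a y Pa Py : R) : R :=
  Q2_a a Pa Py + y * Q1_a a Pa Py + y ^+ 2 / 2 * G_a a Pa Py.

(* a-domain: a > 0 with Delta(a) > 0 (an interval); J is its image under u = sqrt a *)
Definition Jset : set R := [set u | 0 < u /\ 0 < Delta (u ^+ 2)].
Definition Mset : set 'rV[R]_2 := [set m | Jset (m 0 0)].
(* T*M with canonical coordinates (u, y, P_u, P_y) *)
Definition TMset : set 'rV[R]_4 := [set z | Jset (z 0 0)].

(* metric g = xdot^2 a^{-2} da^2 + a^{-1} dy^2 written in (u, y):
   a = u^2, da = 2u du *)
Definition g_uu (u : R) : R := (xdot (u ^+ 2)) ^+ 2 / (u ^+ 2) ^+ 2 * (2 * u) ^+ 2.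
Definition g_yy (u : R) : R := 1 / u ^+ 2.
Definition gmat (m : 'rV[R]_2) : 'M[R]_2 :=
  \matrix_(i < 2, j < 2)
    (if i == j then (if i == 0 then g_uu (m 0 0) else g_yy (m 0 0)) else 0).

(* S1, S2 as functions on T*M: a = u^2, P_a = P_u / (2u) *)
Definition S1 (z : 'rV[R]_4) : R :=
  let u := z 0 0 in
  S1_a (u ^+ 2) (z 0 1) (z 0 2 / (2 * u)) (z 0 3).
Definition S2 (z : 'rV[R]_4) : R :=
  let u := z 0 0 in
  S2_a (u ^+ 2) (z 0 1) (z 0 2 / (2 * u)) (z 0 3).

Definition globally_defined : Prop :=
  [/\
      (forall i j : 'I_2, smooth_on Mset (fun m => gmat m i j)),
      (forall m, Mset m -> posdef2 (gmat m)),
      (* hyperbolic form via a diffeomorphism t = t(u) of J onto a half-line *)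
      (exists (I : set R) (t tinv : R -> R) (Phi : 'rV[R]_2 -> R),
         [/\ (I = [set s | 0 < s] \/ I = [set s | s < 0]),
             ((forall u, Jset u -> I (t u)) /\ (forall s, I s -> Jset (tinv s)) /\
              (forall u, Jset u -> tinv (t u) = u) /\ (forall s, I s -> t (tinv s) = s)),
             (smooth1 Jset t /\ smooth1 I tinv),
             (smooth_on Mset Phi /\ (forall m, Mset m -> 0 < Phi m)) &
             forall m, Mset m ->
               gmat m = (Phi m / (t (m 0 0)) ^+ 2) *:
                 \matrix_(i < 2, j < 2)
                   (if i == j then (if i == 0 then (derive1 t (m 0 0)) ^+ 2 else 1)
                    else 0)]),
      smooth_on TMset S1 &
      smooth_on TMset S2].

End Defs.

(* Main.v *)
Require Import Defs.
From HB Require Import structures.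
From mathcomp Require Import all_boot all_order all_algebra.
From mathcomp Require Import all_classical all_reals all_analysis.
From mathcomp Require Import ring lra.
Set Implicit Arguments. Unset Strict Implicit. Unset Printing Implicit Defensive.
Import Order.TTheory GRing.Theory Num.Theory.
Import numFieldNormedType.Exports.
Local Open Scope classical_set_scope.
Local Open Scope ring_scope.


Lemma derive_line (R : realType) (V : normedModType R) (f : V -> R) x v :
  'D_v f x = 'D_1 (fun h : R => f (h *: v + x)) 0.
Proof.
rewrite /derive; set g1 := fun h => h^-1 *: _; set g2 := fun h => h^-1 *: _.
suff -> : g1 = g2 by [].
by rewrite funeqE /g1 /g2 => h /=; rewrite addr0 scale0r add0r [_%:A]mulr1.
Qed.

Lemma chain1 (R : realType) (V : normedModType R) (f : V -> R) (h : R -> R) x v dh :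
  is_derive (f x) 1 h dh -> derivable f x v ->
  derivable (h \o f) x v /\ 'D_v (h \o f) x = dh * 'D_v f x.
Proof.
move=> Hh /derivable1P df.
have e : f (0 *: v + x) = f x by rewrite scale0r add0r.
have Hh' : is_derive (f (0 *: v + x)) 1 h dh by rewrite e.
have := @is_derive1_comp R h (fun r => f (r *: v + x)) 0 dh _ Hh' (derivableP df).
move=> [d1 d2]; split; first by apply/derivable1P.
by rewrite derive_line [in RHS]derive_line; exact: d2.
Qed.

Section Gen.
Variables (R : realType) (V : normedModType R) (P : V -> Prop) (U : set V).
Hypothesis Uo : open U.

Fixpoint CkG (k : nat) (f : V -> R) : Prop :=
  match k with
  | 0 => forall x, U x -> {for x, continuous f}
  | k'.+1 => (forall x, U x -> {for x, continuous f}) /\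
     forall v, P v -> (forall x, U x -> derivable f x v) /\
        CkG k' (fun x => 'D_v f x)
  end.

Lemma CkG_cont k f : CkG k f -> forall x, U x -> {for x, continuous f}.
Proof. by case: k => [|k] //= [] . Qed.

Lemma CkG_pred k f : CkG k.+1 f -> CkG k f.
Proof.
elim: k f => [|k IH] f /= [cf Hf] //; split => // v Pv.
by have [d /IH] := Hf v Pv.
Qed.

Lemma nearU x : U x -> \forall y \near x, U y.
Proof. by move=> Ux; move: Uo; rewrite openE => /(_ x Ux). Qed.

Lemma CkG_ext k f g : (forall x, U x -> f x = g x) -> CkG k f -> CkG k g.
Proof.
have contE (f1 g1 : V -> R) x : (forall x, U x -> f1 x = g1 x) -> U x ->
   {for x, continuous f1} -> {for x, continuous g1}.
  move=> E Ux cf; have e : g1 x = f1 x by rewrite E.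
  rewrite /prop_for /continuous_at e.
  apply: cvg_trans cf; apply: near_eq_cvg.
  by apply: filterS (nearU Ux) => y Uy; rewrite E.
elim: k f g => [|k IH] f g E /=.
  by move=> cf x Ux; exact: (contE f g x E Ux (cf x Ux)).
move=> [cf Hf]; split; first by move=> x Ux; exact: (contE f g x E Ux (cf x Ux)).
move=> v Pv; have [df Df] := Hf v Pv; split.
  move=> x Ux; apply: (near_eq_derivable _ (df x Ux)).
  by apply: filterS (nearU Ux) => y Uy; rewrite E.
apply: IH Df => x Ux; apply: near_eq_derive.
by apply: filterS (nearU Ux) => y Uy; rewrite E.
Qed.

Lemma CkG_cst k c : CkG k (fun _ => c).
Proof.
elim: k c => [|k IH] c /=; first by move=> x _; apply: cvg_cst.
split; first by move=> x _; apply: cvg_cst.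
move=> v Pv; split; first by move=> x _; apply: derivable_cst.
apply: (@CkG_ext _ (fun _ => 0)); last exact: IH.
by move=> x _; rewrite (derive_cst c).
Qed.

Lemma CkG_add k f g : CkG k f -> CkG k g -> CkG k (fun x => f x + g x).
Proof.
elim: k f g => [|k IH] f g /=.
  by move=> cf cg x Ux; apply: continuousD; [apply: cf|apply: cg].
move=> [cf Hf] [cg Hg]; split.
  by move=> x Ux; apply: continuousD; [apply: cf|apply: cg].
move=> v Pv; have [df Df] := Hf v Pv; have [dg Dg] := Hg v Pv; split.
  by move=> x Ux; apply: derivableD; [apply: df|apply: dg].
apply: (@CkG_ext _ (fun x => 'D_v f x + 'D_v g x)); last exact: IH.
by move=> x Ux; rewrite (deriveD (df x Ux) (dg x Ux)).
Qed.

Lemma CkG_mul k f g : CkG k f -> CkG k g -> CkG k (fun x => f x * g x).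
Proof.
elim: k f g => [|k IH] f g /=.
  by move=> cf cg x Ux; apply: continuousM; [apply: cf|apply: cg].
move=> [cf Hf] [cg Hg]; split.
  by move=> x Ux; apply: continuousM; [apply: cf|apply: cg].
move=> v Pv; have [df Df] := Hf v Pv; have [dg Dg] := Hg v Pv; split.
  by move=> x Ux; apply: derivableM; [apply: df|apply: dg].
apply: (@CkG_ext _ (fun x => f x * 'D_v g x + g x * 'D_v f x)).
  by move=> x Ux; rewrite (deriveM (df x Ux) (dg x Ux)).
have Ckf : CkG k f by apply: CkG_pred; split.
have Ckg : CkG k g by apply: CkG_pred; split.
by apply: CkG_add; apply: IH.
Qed.

Lemma CkG_inv k f : (forall x, U x -> f x != 0) -> CkG k f -> CkG k (fun x => (f x)^-1).
Proof.
move=> nz; elim: k f nz => [|k IH] f nz /=.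
  by move=> cf x Ux; apply: continuousV; [apply: nz|apply: cf].
move=> [cf Hf]; split.
  by move=> x Ux; apply: continuousV; [apply: nz|apply: cf].
move=> v Pv; have [df Df] := Hf v Pv; split.
  by move=> x Ux; apply: derivableV; [apply: nz|apply: df].
apply: (@CkG_ext _ (fun x => (-1) * ((f x)^-1 * (f x)^-1) * 'D_v f x)).
  move=> x Ux; rewrite (deriveV (nz x Ux) (df x Ux)).
  by rewrite -exprVn expr2 mulN1r.
have Ckf : CkG k f by apply: CkG_pred; split.
by apply: CkG_mul => //; apply: CkG_mul; [apply: CkG_cst|apply: CkG_mul; apply: IH].
Qed.

Lemma CkG_sqrt k f : (forall x, U x -> 0 < f x) -> CkG k f ->
  CkG k (fun x => Num.sqrt (f x)).
Proof.
move=> pos; elim: k f pos => [|k IH] f pos /=.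
  move=> cf x Ux; apply: (continuous_comp (cf x Ux)); exact: sqrt_continuous.
move=> [cf Hf]; split.
  move=> x Ux; apply: (continuous_comp (cf x Ux)); exact: sqrt_continuous.
move=> v Pv; have [df Df] := Hf v Pv; split.
  by move=> x Ux; have [] := chain1 (is_derive1_sqrt (pos x Ux)) (df x Ux).
apply: (@CkG_ext _ (fun x => (2 * Num.sqrt (f x))^-1 * 'D_v f x)).
  by move=> x Ux; have [_ ->] := chain1 (is_derive1_sqrt (pos x Ux)) (df x Ux).
have Ckf : CkG k f by apply: CkG_pred; split.
apply: CkG_mul => //; apply: CkG_inv.
  by move=> x Ux; rewrite mulf_neq0 // gt_eqF // sqrtr_gt0 pos.
by apply: CkG_mul; [apply: CkG_cst| apply: IH].
Qed.

Definition smG f := forall k, CkG k f.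

Lemma smG_cst c : smG (fun _ => c).
Proof. by move=> k; apply: CkG_cst. Qed.
Lemma smG_add f g : smG f -> smG g -> smG (fun x => f x + g x).
Proof. by move=> ? ? k; apply: CkG_add. Qed.
Lemma smG_mul f g : smG f -> smG g -> smG (fun x => f x * g x).
Proof. by move=> ? ? k; apply: CkG_mul. Qed.
Lemma smG_inv f : (forall x, U x -> f x != 0) -> smG f -> smG (fun x => (f x)^-1).
Proof. by move=> ? ? k; apply: CkG_inv. Qed.
Lemma smG_sqrt f : (forall x, U x -> 0 < f x) -> smG f -> smG (fun x => Num.sqrt (f x)).
Proof. by move=> ? ? k; apply: CkG_sqrt. Qed.
Lemma smG_ext f g : (forall x, U x -> f x = g x) -> smG f -> smG g.
Proof. by move=> E Hf k; apply: CkG_ext E _. Qed.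
Lemma smG_cont f : smG f -> forall x, U x -> {for x, continuous f}.
Proof. by move=> Hf; apply: (CkG_cont (Hf 0%N)). Qed.
Lemma smG_D f v : P v -> smG f -> smG (fun x => 'D_v f x).
Proof. by move=> Pv Hf k; have [_ /(_ v Pv) []] := Hf k.+1. Qed.
Lemma smG_derivable f v : P v -> smG f -> forall x, U x -> derivable f x v.
Proof. by move=> Pv Hf; have [_ /(_ v Pv) []] := Hf 1%N. Qed.

End Gen.

Section Coord.
Variables (R : realType) (n : nat) (P : 'rV[R]_n -> Prop) (U : set 'rV[R]_n).
Hypothesis Uo : open U.

Lemma smG_coord (j : 'I_n) : smG P U (fun z : 'rV[R]_n => z 0 j).
Proof.
have dc x : differentiable (fun z : 'rV[R]_n => z 0 j) x by apply: differentiable_coord.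
move=> k; elim: k j dc => [|k IH] j dc /=.
  by move=> x _; apply: differentiable_continuous.
split; first by move=> x _; apply: differentiable_continuous.
move=> v Pv; split; first by move=> x _; apply: diff_derivable.
apply: (@CkG_ext _ _ _ _ Uo _ (fun _ => v 0 j)); last exact: CkG_cst.
move=> x _; have E := @derive_mx R _ 1 n id x v (@derivable_id R _ x v).
rewrite derive_id in E; have := congr1 (fun M : 'rV[R]_n => M 0 j) E.
by rewrite /= mxE.
Qed.
End Coord.

Section OneD.
Variables (R : realType) (U : set R).
Hypothesis Uo : open U.

Lemma smG_id : smG (fun v : R => v = 1) U id.
Proof.
move=> k; elim: k => [|k IH] /=.
  by move=> x _; apply: cvg_id.
split; first by move=> x _; apply: cvg_id.
move=> v ->; split; first by move=> x _; apply: derivable_id.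
apply: (@CkG_ext _ _ _ _ Uo _ (fun _ => 1)); last exact: CkG_cst.
by move=> x _; rewrite derive_id.
Qed.
End OneD.


Lemma CkG_Ck (R : realType) (n : nat) (U : set 'rV[R]_n) k f :
  CkG (fun v => exists i, v = delta_mx 0 i) U k f -> Ck k U f.
Proof.
elim: k f => [|k IH] f //= [cf Hf]; split => // i.
have [] := Hf (delta_mx 0 i) (ex_intro _ i erefl); split => //; exact: IH.
Qed.

Lemma smG_smooth_on (R : realType) (n : nat) (U : set 'rV[R]_n) f :
  smG (fun v => exists i, v = delta_mx 0 i) U f -> smooth_on U f.
Proof. by move=> H k; apply: CkG_Ck. Qed.

Lemma smG_smooth1 (R : realType) (U : set R) f :
  smG (fun v : R => v = 1) U f -> smooth1 U f.
Proof.
move=> H k; elim: k f H => [|k IH] f H x Ux.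
  by apply: (smG_derivable erefl H).
rewrite derive1Sn.
have -> : derive1 f = (fun x => 'D_1 f x).
  by apply: funext => y; rewrite derive1E.
apply: IH => //; exact: smG_D.
Qed.

Section ISD.
Variables (R : realType).
Implicit Types (f g : R -> R) (x df dg : R).
Lemma isdM f g x df dg : is_derive x (1:R) f df -> is_derive x (1:R) g dg ->
  is_derive x (1:R) (fun y => f y * g y) (f x * dg + g x * df).
Proof. by move=> A B; exact: is_deriveM. Qed.
Lemma isdD f g x df dg : is_derive x (1:R) f df -> is_derive x (1:R) g dg ->
  is_derive x (1:R) (fun y => f y + g y) (df + dg).
Proof. by move=> A B; exact: is_deriveD. Qed.
Lemma isdN f x df : is_derive x (1:R) f df ->
  is_derive x (1:R) (fun y => - f y) (- df).
Proof. by move=> A; exact: is_deriveN. Qed.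
Lemma isdV f x df : f x != 0 -> is_derive x (1:R) f df ->
  is_derive x (1:R) (fun y => (f y)^-1) (- ((f x) ^+ 2)^-1 * df).
Proof. by move=> nz A; exact: is_deriveV. Qed.
Lemma isdC (c : R) x : is_derive x (1:R) (fun _ => c) 0.
Proof. exact: is_derive_cst. Qed.
Lemma isdI x : is_derive x (1:R) (fun y => y) 1.
Proof. exact: is_derive_id. Qed.
Lemma isdS f x df : 0 < f x -> is_derive x (1:R) f df ->
  is_derive x (1:R) (fun y => Num.sqrt (f y)) ((2 * Num.sqrt (f x))^-1 * df).
Proof. by move=> p A; apply: (is_derive1_comp (is_derive1_sqrt p) A). Qed.
End ISD.

Section More.
Variables (R : realType) (V : normedModType R) (P : V -> Prop) (U : set V).
Hypothesis Uo : open U.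
Lemma smG_opp f : smG P U f -> smG P U (fun x => - f x).
Proof.
move=> Hf; apply: (@smG_ext _ _ _ _ Uo (fun x => (-1) * f x)).
  by move=> x _; rewrite mulN1r.
by apply: smG_mul => //; apply: smG_cst.
Qed.
Lemma smG_expn f n : smG P U f -> smG P U (fun x => f x ^+ n).
Proof.
move=> Hf; elim: n => [|n IH].
  by apply: (@smG_ext _ _ _ _ Uo (fun x => 1)) => [x _|]; [rewrite expr0|apply: smG_cst].
apply: (@smG_ext _ _ _ _ Uo (fun x => f x * f x ^+ n)) => [x _|]; first by rewrite exprS.
exact: smG_mul.
Qed.
End More.

Ltac smt := repeat first
  [ assumption
  | apply: smG_cst
  | apply: smG_coord
  | apply: smG_id
  | apply: smG_add
  | apply: smG_opp
  | apply: smG_mul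
  | apply: smG_expn
  | apply: smG_inv
  | apply: smG_sqrt ].

Lemma coord_D (R : realType) (n : nat) (j : 'I_n) (x v : 'rV[R]_n) :
  'D_v (fun z : 'rV[R]_n => z 0 j) x = v 0 j.
Proof.
have E := @derive_mx R _ 1 n id x v (@derivable_id R _ x v).
rewrite derive_id in E; have := congr1 (fun M : 'rV[R]_n => M 0 j) E.
by rewrite /= mxE.
Qed.

Lemma coord_cont (R : realType) (n : nat) (j : 'I_n) (x : 'rV[R]_n) :
  {for x, continuous (fun z : 'rV[R]_n => z 0 j)}.
Proof. by apply: differentiable_continuous; apply: differentiable_coord. Qed.

Lemma open_pre0 (R : realType) (n : nat) (J : set R) : open J ->
  open [set z : 'rV[R]_n.+1 | J (z 0 0)].
Proof.
move=> Jo; have -> : [set z : 'rV[R]_n.+1 | J (z 0 0)] = (fun z : 'rV[R]_n.+1 => z 0 0) @^-1` J by [].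
by apply: open_comp => // x _; apply: coord_cont.
Qed.

Lemma smG_lift (R : realType) (n : nat) (P : 'rV[R]_n.+1 -> Prop) (J : set R) h :
  open J -> smG (fun v : R => v = 1) J h ->
  smG P [set z : 'rV[R]_n.+1 | J (z 0 0)] (fun z => h (z 0 0)).
Proof.
move=> Jo Hh k; have Uo := @open_pre0 R n J Jo.
elim: k h Hh => [|k IH] h Hh /=.
  move=> x Jx; have hc := smG_cont Hh Jx; exact: (continuous_comp (@coord_cont R n.+1 0 x) hc).
split.
  move=> x Jx; have hc := smG_cont Hh Jx; exact: (continuous_comp (@coord_cont R n.+1 0 x) hc).
move=> v Pv.
have ch x : [set z : 'rV[R]_n.+1 | J (z 0 0)] x ->
    derivable (h \o (fun z : 'rV[R]_n.+1 => z 0 0)) x v /\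
    'D_v (h \o (fun z : 'rV[R]_n.+1 => z 0 0)) x = 'D_1 h (x 0 0) * 'D_v (fun z : 'rV[R]_n.+1 => z 0 0) x.
  move=> Jx; apply: chain1; last by apply: diff_derivable; apply: differentiable_coord.
  exact: derivableP (smG_derivable erefl Hh Jx).
split; first by move=> x /ch [].
apply: (@CkG_ext _ _ _ _ Uo _ (fun z => 'D_1 h (z 0 0) * v 0 0)).
  by move=> x /ch [_ ->]; rewrite coord_D.
apply: CkG_mul => //; last exact: CkG_cst.
apply: (IH (fun u => 'D_1 h u)); exact: smG_D.
Qed.



Section Main.
Variables (R : realType) (eps c a1 : R).
Hypothesis H : [\/ (eps = 1 /\ c = 1 /\ a1 < -1),
      (eps = 1 /\ c = -1 /\ a1 < 0),
      (eps = -1 /\ c = 1 /\ 0 < a1 < 1)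
    | (eps = -1 /\ c = -1 /\ 0 < a1)].

Definition DD (u : R) := eps * (u ^+ 2 - a1).
Definition kk : R := - (eps * a1).
Definition mu (u : R) := 1 - c / (DD u * Num.sqrt (DD u)).
Definition tt (u : R) := u - c * u / (kk * Num.sqrt (DD u)).

Lemma scE (x y : R) : x *: y = x * y. Proof. by []. Qed.

Lemma eps_cases : eps = 1 \/ eps = -1.
Proof. by case: H => -[-> _]; [left|left|right|right]. Qed.

Lemma kk_gt0 : 0 < kk.
Proof. rewrite /kk; case: H => -[-> [_ h]]; lra. Qed.

Lemma xdot_eq a : 0 < Delta eps a1 a ->
  xdot eps c a1 a = (1 - c / (Delta eps a1 a * Num.sqrt (Delta eps a1 a))) / 2.
Proof.
move=> p; rewrite /xdot derive1E.
have Hd : is_derive a (1:R) (Delta eps a1) eps.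
  rewrite /Delta; apply: is_derive_eq.
  by rewrite !scE; ring.
have sp : 0 < Num.sqrt (Delta eps a1 a) by rewrite sqrtr_gt0.
have Hs := isdS p Hd.
have Hv := @isdV R (fun y => Num.sqrt (Delta eps a1 y)) a _ (lt0r_neq0 sp) Hs.
have Hx : is_derive a (1:R) (xfun eps c a1)
   (nu1 R * (1:R) / 2 + (xi1 eps c * (- (Num.sqrt (Delta eps a1 a) ^+ 2)^-1 *
       ((2 * Num.sqrt (Delta eps a1 a))^-1 * eps)) + (Num.sqrt (Delta eps a1 a))^-1 * 0)).
  rewrite /xfun; apply: isdD.
    have -> : (fun y => nu1 R * y / 2) = (fun y => y * (nu1 R / 2)).
      by apply: funext => y; rewrite mulrAC mulrC.
    by apply: is_derive_eq; rewrite !scE; ring.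
  by apply: isdM.
rewrite derive_val /nu1 /xi1.
have hs := sqr_sqrtr (ltW p).
move: (Num.sqrt (Delta eps a1 a)) sp hs => s sp <-.
have s0 : s != 0 by apply: lt0r_neq0.
case: eps_cases => ->; field; rewrite ?s0 //.
Qed.

Lemma isDD u : is_derive u (1:R) DD (eps * (2 * u)).
Proof. by rewrite /DD; apply: is_derive_eq; rewrite !scE; ring. Qed.

Lemma tt_derive u : 0 < DD u -> is_derive u (1:R) tt (mu u).
Proof.
move=> p.
have sp : 0 < Num.sqrt (DD u) by rewrite sqrtr_gt0.
have kp := kk_gt0.
have Hs := isdS p (isDD u).
have Hk : is_derive u (1:R) (fun y => kk * Num.sqrt (DD y)) (kk * ((2 * Num.sqrt (DD u))^-1 * (eps * (2 * u)))).
  by apply: is_derive_eq; rewrite !scE; ring.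
have nz : kk * Num.sqrt (DD u) != 0 by rewrite mulf_neq0 // lt0r_neq0.
have Hv := @isdV R (fun y => kk * Num.sqrt (DD y)) u _ nz Hk.
rewrite /tt; apply: is_derive_eq; rewrite !scE /mu.
have hk : kk = Num.sqrt (DD u) ^+ 2 - eps * u ^+ 2.
  by rewrite sqr_sqrtr ?ltW // /kk /DD; ring.
have k0 : Num.sqrt (DD u) ^+ 2 - eps * u ^+ 2 != 0 by rewrite -hk lt0r_neq0.
have hs := sqr_sqrtr (ltW p).
move: (Num.sqrt (DD u)) sp hs hk k0 nz => s sp hs hk k0 _.
have s0 : s != 0 by apply: lt0r_neq0.
rewrite -hs hk; field; by rewrite s0 k0.
Qed.

Definition sg : R := if (c == 1) && (eps == -1) then -1 else 1.

Lemma neq1m1 : ((1:R) == -1) = false. Proof. by apply/eqP; lra. Qed.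
Lemma neqm11 : ((-1:R) == 1) = false. Proof. by apply/eqP; lra. Qed.

Lemma hA (x : R) : 1 < x -> 0 < 1 - x^-1.
Proof. by move=> h; rewrite subr_gt0 invf_lt1 // (lt_trans ltr01). Qed.
Lemma hB (x : R) : 0 < x -> x < 1 -> 0 < - (1 - x^-1).
Proof. by move=> h0 h1; rewrite opprB subr_gt0 invf_gt1. Qed.
Lemma hC (x : R) : 0 < x -> 0 < 1 - - x^-1.
Proof. by move=> h; rewrite opprK; apply: addr_gt0 => //; rewrite invr_gt0. Qed.

Lemma sqrt_facts (y : R) : 0 < y ->
  0 < Num.sqrt y /\ Num.sqrt y ^+ 2 = y.
Proof. by move=> h; split; [rewrite sqrtr_gt0|rewrite sqr_sqrtr // ltW]. Qed.

Lemma J_DD u : Jset eps a1 u -> 0 < u /\ 0 < DD u.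
Proof. by []. Qed.

Lemma mu_sg u : Jset eps a1 u -> 0 < sg * mu u.
Proof.
move=> /J_DD [u0 p]; have [sp hs] := sqrt_facts p.
rewrite /mu; move: (Num.sqrt (DD u)) sp hs => s sp hs; rewrite -hs.
have s3 : 0 < s ^+ 2 * s by rewrite mulr_gt0 // exprn_gt0.
rewrite /sg; move: hs; rewrite /DD.
case: H => -[-> [-> h]] hs; rewrite ?eqxx ?neq1m1 ?neqm11 /= ?mul1r ?mulN1r.
- apply: hA; nra.
- by apply: hC.
- apply: hB => //; nra.
- by apply: hC.
Qed.

Lemma tt_fact u : 0 < DD u -> tt u = u * (1 - c / (kk * Num.sqrt (DD u))).
Proof.
move=> p; have [sp _] := sqrt_facts p; have kp := kk_gt0.
by rewrite /tt; field; apply/andP; split; apply: lt0r_neq0.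
Qed.

Lemma tt_sg u : Jset eps a1 u -> 0 < sg * tt u.
Proof.
move=> /J_DD [u0 p]; rewrite (tt_fact p); have [sp hs] := sqrt_facts p.
move: (Num.sqrt (DD u)) sp hs => s sp hs.
have kp := kk_gt0.
have ks : 0 < kk * s by rewrite mulr_gt0.
rewrite mulrA [sg * u]mulrC -mulrA; apply: mulr_gt0 => //.
move: hs kp ks; rewrite /sg /kk /DD.
case: H => -[-> [-> h]] hs kp ks; rewrite ?eqxx ?neq1m1 ?neqm11 /= ?mul1r ?mulN1r.
- apply: hA; nra.
- apply: hC; nra.
- apply: hB; nra.
- apply: hC; nra.
Qed.

Lemma J_conv u v x : Jset eps a1 u -> Jset eps a1 v -> u <= x <= v -> Jset eps a1 x.
Proof.
move=> [u0 pu] [v0 pv] /andP[ux xv]; split; first lra.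
move: pu pv; rewrite /Delta.
by case: H => -[-> [_ h]] pu pv; nra.
Qed.

Lemma sgtt_derive x : 0 < DD x -> is_derive x (1:R) (fun y => sg * tt y) (sg * mu x).
Proof.
move=> p; have := tt_derive p => Ht.
by apply: is_derive_eq; rewrite !scE; ring.
Qed.

Lemma sgtt_cont u v : (forall x, u <= x <= v -> 0 < DD x) ->
  {within `[u, v], continuous (fun y => sg * tt y)}.
Proof.
move=> h; apply: derivable_within_continuous => x.
rewrite in_itv /= => /h p; by have [] := sgtt_derive p.
Qed.

Lemma tt_mono u v : Jset eps a1 u -> Jset eps a1 v -> u < v -> sg * tt u < sg * tt v.
Proof.
move=> Ju Jv uv.
have Jx x : u <= x -> x <= v -> Jset eps a1 x.
  by move=> a b; apply: (J_conv Ju Jv); rewrite a b.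
apply: (@gtr0_derive1_lt_cc _ (fun x => sg * tt x) u v) => //.
- move=> x; rewrite in_itv /= => /andP[ux xv].
  have [_ p] := J_DD (Jx x (ltW ux) (ltW xv)).
  by have [] := sgtt_derive p.
- move=> x; rewrite in_itv /= => /andP[ux xv].
  have Jx' := Jx x (ltW ux) (ltW xv); have [_ p] := J_DD Jx'.
  by rewrite derive1E (@derive_val _ _ _ _ _ _ _ (sgtt_derive p)); apply: mu_sg.
- by apply: sgtt_cont => x /andP[a b]; have [] := J_DD (Jx x a b).
- by rewrite in_itv /= lexx ltW.
- by rewrite in_itv /= lexx ltW.
Qed.

Lemma tt_inj u v : Jset eps a1 u -> Jset eps a1 v -> tt u = tt v -> u = v.
Proof.
move=> Ju Jv e; have [uv|vu|//] := ltgtP u v.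
- by have := tt_mono Ju Jv uv; rewrite e ltxx.
- by have := tt_mono Jv Ju vu; rewrite e ltxx.
Qed.

Lemma tt0 : tt 0 = 0.
Proof. by rewrite /tt mulr0 mul0r subr0. Qed.

Lemma far_neg (m : R) : 0 < m -> eps = -1 -> exists u2, [/\ 0 < u2,
  (forall x, 0 <= x <= u2 -> 0 < DD x) &
  m + 1 <= u2 / (kk * Num.sqrt (DD u2)) /\ u2 ^+ 2 < kk].
Proof.
move=> m0 e; have kp := kk_gt0.
have [rp rs] := sqrt_facts kp; move: (Num.sqrt kk) rp rs => r rp rs.
have den : 2 <= 2 + 2 * kk * (m + 1) by rewrite lerDl; nra.
set d := r / (2 + 2 * kk * (m + 1)).
have dp : 0 < d by rewrite /d divr_gt0 //; lra.
have dle : d <= r / 2.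
  by rewrite /d ler_pdivrMr ?(lt_le_trans _ den) // mulrAC ler_pdivlMr //; nra.
have d2 : d ^+ 2 < kk by nra.
have kd : 0 < kk - d ^+ 2 by rewrite subr_gt0.
have [up us] := sqrt_facts kd.
move: (Num.sqrt (kk - d ^+ 2)) up us => u2 up us.
have DDe x : DD x = kk - x ^+ 2 by rewrite /DD /kk e; ring.
exists u2; split => //.
  by move=> x /andP[x0 xu]; rewrite DDe subr_gt0; nra.
have -> : Num.sqrt (DD u2) = d.
  by rewrite DDe us (_ : kk - (kk - d ^+ 2) = d ^+ 2) ?sqrtr_sqr ?ger0_norm ?(ltW dp) //; ring.
split; last by nra.
have ur : r / 2 <= u2 by nra.
have kr : 0 < kk * r by rewrite mulr_gt0.
have E : u2 / (kk * d) * (kk * r) = u2 * (2 + 2 * kk * (m + 1)).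
  rewrite /d; field; apply/andP; split; [lra| apply/andP; split; lra].
rewrite -(ler_pM2r kr) E; nra.
Qed.

Lemma far s : 0 < sg * s -> exists u2, [/\ 0 < u2,
  (forall x, 0 <= x <= u2 -> 0 < DD x) & sg * s <= sg * tt u2].
Proof.
move=> ps; have kp := kk_gt0.
have ttE u : 0 < DD u -> tt u = u - c * (u / (kk * Num.sqrt (DD u))).
  by move=> _; rewrite /tt mulrA.
move: ps ttE; rewrite /sg.
case: H => -[e [ec h]]; rewrite ?ec ?e ?eqxx ?neq1m1 ?neqm11 /= ?mul1r ?mulN1r => ps ttE.
-
  have DDe x : DD x = x ^+ 2 + kk by rewrite /DD /kk e; ring.
  have k1 : 1 < kk by rewrite /kk e; lra.
  set u2 := s * kk / (kk - 1).
  have u2p : 0 < u2 by rewrite /u2 divr_gt0 ?mulr_gt0 //; lra.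
  exists u2; split => //.
    by move=> x _; rewrite DDe; nra.
  have p : 0 < DD u2 by rewrite DDe; nra.
  rewrite (tt_fact p) mul1r.
  have [qp qs] := sqrt_facts p; move: (Num.sqrt (DD u2)) qp qs => q qp qs.
  have q1 : 1 <= q by rewrite DDe in qs; nra.
  have h1 : 1 - kk^-1 <= 1 - (kk * q)^-1.
    rewrite lerD2l lerN2 lef_pV2 ?posrE ?mulr_gt0 //; nra.
  have -> : s = u2 * (1 - kk^-1) by rewrite /u2; field; apply/andP; split; lra.
  by rewrite ec mul1r ler_pM2l.
-
  have DDe x : DD x = x ^+ 2 + kk by rewrite /DD /kk e; ring.
  exists s; split => //.
    by move=> x _; rewrite DDe; nra.
  have p : 0 < DD s by rewrite DDe; nra.
  rewrite (ttE _ p) mul1r mulN1r opprK lerDl.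
  have [qp _] := sqrt_facts p.
  by rewrite ltW // divr_gt0 // mulr_gt0.
-
  have [u2 [u2p hx [hq hu]]] := far_neg ps e.
  exists u2; split => //.
  have p : 0 < DD u2 by apply: hx; rewrite ltW //=.
  rewrite (ttE _ p) !mul1r mulN1r.
  have k1 : kk < 1 by rewrite /kk e; lra.
  have u1 : u2 < 1 by nra.
  lra.
-
  have [u2 [u2p hx [hq hu]]] := far_neg ps e.
  exists u2; split => //.
  have p : 0 < DD u2 by apply: hx; rewrite ltW //=.
  rewrite (ttE _ p) !mulN1r opprK mul1r. lra.
Qed.

Lemma sg2 : sg * sg = 1.
Proof. by rewrite /sg; case: ifP => _; rewrite ?mulN1r ?opprK ?mulr1. Qed.

Lemma tt_surj s : 0 < sg * s -> exists2 u, Jset eps a1 u & tt u = s.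
Proof.
move=> ps; have [u2 [u2p hx hs]] := far ps.
have cont := sgtt_cont hx.
have [|x xin fx] := @IVT R (fun y => sg * tt y) 0 u2 (sg * s) (ltW u2p) cont.
  have h0 : 0 <= sg * tt u2 by apply: le_trans hs; apply: ltW.
  rewrite /= tt0 mulr0 min_l ?max_r //; by rewrite (ltW ps) hs.
have txs : tt x = s by rewrite -[tt x]mul1r -sg2 -mulrA fx mulrA sg2 mul1r.
move: xin; rewrite in_itv /= => /andP[x0 xu].
have xn0 : x != 0.
  by apply/eqP => e; move: ps; rewrite -txs e tt0 mulr0 ltxx.
exists x => //; split; first by rewrite lt_neqAle eq_sym xn0.
by apply: hx; rewrite x0 xu.
Qed.

Lemma smDD (U : set R) : open U -> smG (fun v : R => v = 1) U DD.
Proof. move=> Uo; rewrite /DD; smt. Qed.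

Lemma openJ : open (Jset eps a1).
Proof.
have -> : Jset eps a1 = [set u | 0 < u] `&` (DD @^-1` [set y | 0 < y]) by [].
apply: openI; first exact: open_gt.
apply: open_comp; last exact: open_gt.
by move=> x _; apply: (smG_cont (smDD openT)).
Qed.

Section OnU.
Variable U : set R.
Hypothesis Uo : open U.
Hypothesis UD : forall u, U u -> 0 < DD u.

Lemma smSq : smG (fun v : R => v = 1) U (fun u => Num.sqrt (DD u)).
Proof. apply: smG_sqrt => //; exact: smDD. Qed.

Lemma sqD_pos u : U u -> 0 < Num.sqrt (DD u).
Proof. by move=> Uu; rewrite sqrtr_gt0 UD. Qed.

Lemma smtt : smG (fun v : R => v = 1) U tt.
Proof.
have kp := kk_gt0.
rewrite /tt; smt.
by move=> x Ux; rewrite mulf_neq0 // lt0r_neq0 // (sqD_pos Ux).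
Qed.

Lemma smmu : smG (fun v : R => v = 1) U mu.
Proof.
rewrite /mu; have := smSq => hS; have := smDD Uo => hD; smt.
by move=> x Ux; rewrite mulf_neq0 // lt0r_neq0 // ?(sqD_pos Ux) ?UD.
Qed.

Lemma smXd : smG (fun v : R => v = 1) U (fun u => xdot eps c a1 (u ^+ 2)).
Proof.
apply: (smG_ext Uo (f := fun u => mu u / 2)).
  by move=> u Uu; rewrite xdot_eq //; apply: UD.
by have := smmu => hm; smt.
Qed.

End OnU.

Lemma JD u : Jset eps a1 u -> 0 < DD u.
Proof. by case/J_DD. Qed.

Definition Iset : set R := [set s | 0 < sg * s].

Definition tinv (s : R) : R :=
  match pselect (exists u, Jset eps a1 u /\ tt u = s) with
  | left e => proj1_sig (cid e)
  | right _ => 0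
  end.

Lemma tinvP s : Iset s -> Jset eps a1 (tinv s) /\ tt (tinv s) = s.
Proof.
move=> Is; rewrite /tinv; case: pselect => [e|ne].
  exact: (proj2_sig (cid e)).
by exfalso; apply: ne; have [u Ju tu] := tt_surj Is; exists u.
Qed.

Lemma tinvK u : Jset eps a1 u -> tinv (tt u) = u.
Proof.
move=> Ju; have [J1 t1] := tinvP (tt_sg Ju).
exact: tt_inj J1 Ju t1.
Qed.

Lemma openI_ : open Iset.
Proof.
have -> : Iset = (fun s => sg * s) @^-1` [set y | 0 < y] by [].
apply: open_comp; last exact: open_gt.
move=> x _; apply: (smG_cont (P := fun v : R => v = 1) (U := setT)) => //.
by smt; exact: openT.
Qed.

Lemma mu_neq0 u : Jset eps a1 u -> mu u != 0.
Proof. by move=> /mu_sg h; apply/eqP => e; move: h; rewrite e mulr0 ltxx. Qed.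

Lemma tinv_derive s : Iset s ->
  {for s, continuous tinv} /\ is_derive s (1:R) tinv (mu (tinv s))^-1.
Proof.
move=> Is; have [Ju tu] := tinvP Is; move: (tinv s) Ju tu => u Ju tu.
rewrite -tu.
have nJ := nearU openJ Ju.
have hK : {near u, cancel tt tinv} by apply: filterS nJ => y Jy; apply: tinvK.
have hC : {near u, continuous tt}.
  apply: filterS nJ => y Jy; exact: (smG_cont (smtt openJ JD) Jy).
have hd := tt_derive (JD Ju).
split; last exact: is_derive_inverse hK hC hd (mu_neq0 Ju).
exact: nbhs_singleton (near_can_continuous hK hC).
Qed.

Lemma comp_tinv k h : smG (fun v : R => v = 1) (Jset eps a1) h ->
  CkG (fun v : R => v = 1) Iset k (fun s => h (tinv s)).
Proof.
have Io := openI_.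
elim: k h => [|k IH] h Hh /=.
  move=> s Is; have [Js _] := tinvP Is; have [tc _] := tinv_derive Is.
  exact: (continuous_comp tc (smG_cont Hh Js)).
have dd s : Iset s -> is_derive s (1:R) (h \o tinv) ('D_1 h (tinv s) * (mu (tinv s))^-1).
  move=> Is; have [Js _] := tinvP Is; have [_ td] := tinv_derive Is.
  apply: is_derive1_comp => //; exact: derivableP (smG_derivable erefl Hh Js).
split.
  move=> s Is; have [Js _] := tinvP Is; have [tc _] := tinv_derive Is.
  exact: (continuous_comp tc (smG_cont Hh Js)).
move=> v ->; split; first by move=> s /dd [].
apply: (@CkG_ext _ _ _ _ Io _ (fun s => (fun u => 'D_1 h u * (mu u)^-1) (tinv s))).
  by move=> s /dd hd; rewrite (@derive_val _ _ _ _ _ _ _ hd).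
apply: (IH (fun u => 'D_1 h u * (mu u)^-1)); apply: (smG_mul openJ); first exact: smG_D.
apply: (smG_inv openJ); first by move=> u /mu_neq0.
exact: smmu openJ JD.
Qed.

Lemma smooth_tinv : smooth1 Iset tinv.
Proof.
apply: smG_smooth1 => k; apply: (comp_tinv k (h := id)).
exact: smG_id openJ.
Qed.

Lemma smooth_tt : smooth1 (Jset eps a1) tt.
Proof. apply: smG_smooth1; exact: smtt openJ JD. Qed.

Lemma u_neq0 u : Jset eps a1 u -> u != 0.
Proof. by case => h _; apply: lt0r_neq0. Qed.

Lemma sm_guu : smG (fun v : R => v = 1) (Jset eps a1) (g_uu eps c a1).
Proof.
have Uo := openJ; have hX := smXd openJ JD.
rewrite /g_uu; smt.
by move=> u /u_neq0 h; rewrite !expf_neq0.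
Qed.

Lemma sm_gyy : smG (fun v : R => v = 1) (Jset eps a1) (g_yy (R:=R)).
Proof.
have Uo := openJ; rewrite /g_yy; smt.
by move=> u /u_neq0 h; rewrite !expf_neq0.
Qed.

Lemma gmat_smooth (i j : 'I_2) : smooth_on (Mset eps a1) (fun m => gmat eps c a1 m i j).
Proof.
have -> : (fun m => gmat eps c a1 m i j) = (fun m => if i == j then
   (if i == 0 then g_uu eps c a1 (m 0 0) else g_yy (m 0 0)) else 0).
  by apply: funext => m; rewrite /gmat mxE.
apply: smG_smooth_on.
case: (i == j); last by apply: smG_cst; exact: (@open_pre0 R 1 _ openJ).
case: (i == 0).
  exact: (smG_lift _ openJ sm_guu).
exact: (smG_lift _ openJ sm_gyy).
Qed.

Lemma xd_neq0 u : Jset eps a1 u -> xdot eps c a1 (u ^+ 2) != 0.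
Proof.
move=> Ju; rewrite xdot_eq; last exact: JD.
apply: mulf_neq0; [exact: (mu_neq0 Ju) | by rewrite invr_neq0 // pnatr_eq0].
Qed.
Lemma sq_neq0 u : Jset eps a1 u -> Num.sqrt (Delta eps a1 (u ^+ 2)) != 0.
Proof. by move=> Ju; rewrite lt0r_neq0 // sqrtr_gt0 JD. Qed.
Lemma tu_neq0 u : Jset eps a1 u -> 2 * u != 0.
Proof. by move=> Ju; rewrite mulf_neq0 ?pnatr_eq0 // u_neq0. Qed.
Lemma D_neq0 u : Jset eps a1 u -> Delta eps a1 (u ^+ 2) != 0.
Proof. by move=> Ju; rewrite lt0r_neq0 // JD. Qed.

Definition PP (n : nat) := fun v : 'rV[R]_n => exists i, v = delta_mx 0 i.

Lemma S1_smooth : smooth_on (TMset eps a1) (S1 eps c a1).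
Proof.
apply: smG_smooth_on.
have Uo : open (TMset eps a1) := @open_pre0 R 3 _ openJ.
have hX : smG (@PP 4) (TMset eps a1) (fun z => xdot eps c a1 (z 0 0 ^+ 2)) :=
  smG_lift _ openJ (smXd openJ JD).
have hS : smG (@PP 4) (TMset eps a1) (fun z => Num.sqrt (Delta eps a1 (z 0 0 ^+ 2))) :=
  smG_lift _ openJ (smSq openJ JD).
have hD : smG (@PP 4) (TMset eps a1) (fun z => Delta eps a1 (z 0 0 ^+ 2)) :=
  smG_lift _ openJ (smDD openJ).
rewrite /S1 /S1_a /Q1_a /G_a /H_a /Pi_a /bt0 /bt1 /nu1 /xi1 /sigma0 /sigma1 /sigma1_0 /sigma1_m1 /A1 /A0.
cbv zeta.
smt.
all: move=> z Jz; first [exact: (xd_neq0 Jz) | exact: (sq_neq0 Jz) | exact: (tu_neq0 Jz) | exact: (D_neq0 Jz)].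
Qed.

Lemma S2_smooth : smooth_on (TMset eps a1) (S2 eps c a1).
Proof.
apply: smG_smooth_on.
have Uo : open (TMset eps a1) := @open_pre0 R 3 _ openJ.
have hX : smG (@PP 4) (TMset eps a1) (fun z => xdot eps c a1 (z 0 0 ^+ 2)) :=
  smG_lift _ openJ (smXd openJ JD).
have hS : smG (@PP 4) (TMset eps a1) (fun z => Num.sqrt (Delta eps a1 (z 0 0 ^+ 2))) :=
  smG_lift _ openJ (smSq openJ JD).
have hD : smG (@PP 4) (TMset eps a1) (fun z => Delta eps a1 (z 0 0 ^+ 2)) :=
  smG_lift _ openJ (smDD openJ).
rewrite /S2 /S2_a /Q1_a /Q2_a /G_a /H_a /Pi_a /bt0 /bt1 /ct0 /ct1 /nu1 /xi1 /sigma0 /sigma1 /sigma1_0 /sigma1_m1 /sigma1_1 /A1 /A0.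
cbv zeta.
smt.
all: move=> z Jz; first [exact: (xd_neq0 Jz) | exact: (sq_neq0 Jz) | exact: (tu_neq0 Jz) | exact: (D_neq0 Jz)].
Qed.

Lemma guu_eq u : Jset eps a1 u -> g_uu eps c a1 u = mu u ^+ 2 / u ^+ 2.
Proof.
move=> Ju; rewrite /g_uu xdot_eq; last exact: JD.
rewrite -/(DD u) -/(mu u).
have := u_neq0 Ju => u0; field; exact: u0.
Qed.

Lemma posdef_g m : Mset eps a1 m -> posdef2 (gmat eps c a1 m).
Proof.
move=> Jm v vn0.
have Ju : Jset eps a1 (m 0 0) := Jm.
rewrite !mxE !big_ord_recr !big_ord0 /= !mxE !big_ord_recr !big_ord0 /= !mxE /=.
set a := v 0 _; set b := v 0 ord_max.
have sqp (x : R) : x != 0 -> 0 < x ^+ 2 by move=> x0; rewrite exprn_even_gt0 // x0 orbT.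
have sq (x : R) : x != 0 -> 0 < x * x by move=> /sqp; rewrite expr2.
have u0 := u_neq0 Ju.
have G : 0 < g_uu eps c a1 (m 0 0).
  by rewrite guu_eq //; apply: divr_gt0; apply: sqp => //; apply: mu_neq0.
have Y : 0 < g_yy (m 0 0) by rewrite /g_yy; apply: divr_gt0 => //; apply: sqp.
have [a0|a0] := eqVneq a 0; last by have := sq a a0; nra.
have [b0|b0] := eqVneq b 0; last by have := sq b b0; nra.
exfalso; move/eqP: vn0; apply; apply/rowP => i; rewrite mxE.
case: i => [[|[|//]]] Hi.
  by rewrite -[X in _ = X]a0; congr (v 0 _); apply: val_inj.
by rewrite -[X in _ = X]b0; congr (v 0 _); apply: val_inj.
Qed.

Lemma tt_neq0 u : Jset eps a1 u -> tt u != 0.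
Proof. by move=> /tt_sg h; apply/eqP => e; move: h; rewrite e mulr0 ltxx. Qed.

Lemma main_gd : globally_defined eps c a1.
Proof.
split.
- exact: gmat_smooth.
- exact: posdef_g.
- exists Iset, tt, tinv, (fun m => tt (m 0 0) ^+ 2 / m 0 0 ^+ 2); split.
  + rewrite /Iset /sg; case: ifP => _; [right|left]; apply/seteqP; split => x /=; lra.
  + split; first by move=> u; apply: tt_sg.
    split; first by move=> s /tinvP [].
    split; first by move=> u; apply: tinvK.
    by move=> s /tinvP [].
  + split; [exact: smooth_tt | exact: smooth_tinv].
  + split.
      apply: smG_smooth_on; apply: (smG_lift _ openJ (h := fun u => tt u ^+ 2 / u ^+ 2)).
      have := smtt openJ JD => ht; have Uo := openJ; smt.
      by move=> u Ju; rewrite expf_neq0 // u_neq0.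
    move=> m Jm; have Ju : Jset eps a1 (m 0 0) := Jm.
    apply: divr_gt0; rewrite exprn_even_gt0 //; [rewrite tt_neq0 | rewrite u_neq0]; by rewrite ?orbT.
  + move=> m Jm; have Ju : Jset eps a1 (m 0 0) := Jm.
    have t0 := tt_neq0 Ju; have u0 := u_neq0 Ju.
    have dt : derive1 tt (m 0 0) = mu (m 0 0).
      by rewrite derive1E (@derive_val _ _ _ _ _ _ _ (tt_derive (JD Ju))).
    apply/matrixP => i j; rewrite !mxE dt.
    case: (i == j); last by rewrite mulr0.
    case: (i == 0).
      rewrite guu_eq //; field; by rewrite t0 u0.
    rewrite /g_yy; field; by rewrite t0 u0.
- exact: S1_smooth.
- exact: S2_smooth.
Qed.
End Main.


Local Close Scope classical_set_scope.
Unset Implicit Arguments.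

Theorem proposition27 (R : realType) (eps c a1 : R) :
  [\/ (eps = 1 /\ c = 1 /\ a1 < -1),
      (eps = 1 /\ c = -1 /\ a1 < 0),
      (eps = -1 /\ c = 1 /\ 0 < a1 < 1)
    | (eps = -1 /\ c = -1 /\ 0 < a1)] ->
  globally_defined eps c a1.
Proof. by move=> H; apply: main_gd. Qed.
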